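(* Let $G$ be a graph with at least one vertex and maximum degree $\Delta$, and let $\lambda,\beta,\gamma>0$ be such that the hard-core model on $G$ at fugacity $\lambda$ has local $(\beta,\gamma)$-occupancy. Then \[ \frac{1}{|V(G)|}\,\frac{\lambda Z_G'(\lambda)}{Z_G(\lambda)}\ \ge\ \frac{1}{\beta+\gamma\Delta}, \qquad\text{and in particular}\qquad \alpha(G)\ \ge\ \frac{|V(G)|}{\beta+\gamma\Delta}. \]
   Context: All graphs are finite and simple. For a graph $G$, $\mathcal I(G)$ denotes the set of independent sets of $G$ (including $\varnothing$), $\alpha(G)$ the maximum size of an independent set, and $Z_G(\lambda)=\sum_{I\in\mathcal I(G)}\lambda^{|I|}$ the partition function (independence polynomial), with $Z_G'$ its derivative in $\lambda$. The hard-core model on $G$ at fugacity $\lambda>0$ is the probability distribution on $\mathcal I(G)$ with $\Pr(\mathbf I=I)=\lambda^{|I|}/Z_G(\lambda)$; note $\mathbb E|\mathbf I|=\lambda Z_G'(\lambda)/Z_G(\lambda)$. $N(u)$ is the neighbourhood of $u$ and $G[N(u)]$ the subgraph it induces. Given $\lambda>0$ and positive reals $(\beta_u,\gamma_u)$ for $u\in V(G)$, the hard-core model on $G$ at fugacity $\lambda$ has local $(\beta_u,\gamma_u)_u$-occupancy if for every $u\in V(G)$ and every induced subgraph $F$ of $G[N(u)]$ (including the graph with no vertices, for which $Z_F=1$, $Z_F'=0$), \[\beta_u\frac{\lambda}{1+\lambda}\frac{1}{Z_F(\lambda)}+\gamma_u\frac{\lambda Z_F'(\lambda)}{Z_F(\lambda)}\ge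 1.\] Local $(\beta,\gamma)$-occupancy means local $(\beta_u,\gamma_u)_u$-occupancy with $\beta_u=\beta,\gamma_u=\gamma$ for all $u$. *)

(* Defs.v *)
From HB Require Import structures.
From mathcomp Require Import all_boot all_order all_algebra.
Set Implicit Arguments. Unset Strict Implicit. Unset Printing Implicit Defensive.
Import Order.TTheory GRing.Theory Num.Theory.
Local Open Scope ring_scope.

Definition simple_graph (T : finType) (e : rel T) : Prop :=
  symmetric e /\ irreflexive e.

Definition nbhd (T : finType) (e : rel T) (u : T) : {set T} := [set w | e u w].

Definition indep (T : finType) (e : rel T) (I : {set T}) : bool :=
  [forall x in I, forall y in I, ~~ e x y].

Definition maxdeg (T : finType) (e : rel T) : nat := (\max_(u : T) #|nbhd e u|)%N.

Definition alpha (T : finType) (e : rel T) : nat :=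
  (\max_(I : {set T} | indep e I) #|I|)%N.

(* Independence polynomial of the induced subgraph G[S]:
   sum over independent sets I of G contained in S of X^|I|. *)
Definition indpoly (R : nzRingType) (T : finType) (e : rel T) (S : {set T})
  : {poly R} :=
  \sum_(I : {set T} | (I \subset S) && indep e I) 'X^#|I|.

Definition Zpart (R : nzRingType) (T : finType) (e : rel T) (S : {set T}) (l : R) : R :=
  (indpoly R e S).[l].
Definition Zderiv (R : nzRingType) (T : finType) (e : rel T) (S : {set T}) (l : R) : R :=
  (indpoly R e S)^`().[l].

(* Local (beta,gamma)-occupancy: for every vertex u and every induced
   subgraph F of G[N(u)] (i.e. F = G[S] with S a subset of N(u)). *)
Definition local_occupancy (R : realFieldType) (T : finType) (e : rel T)
  (l b g : R) : Prop :=
  forall (u : T) (S : {set T}), S \subset nbhd e u ->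
    1 <= b * (l / (1 + l)) * (Zpart e S l)^-1
         + g * (l * Zderiv e S l / Zpart e S l).

(* Main.v *)
Require Import Defs.
From HB Require Import structures.
From mathcomp Require Import all_boot all_order all_algebra.
From mathcomp Require Import ring lra.
Set Implicit Arguments. Unset Strict Implicit. Unset Printing Implicit Defensive.
Import Order.TTheory GRing.Theory Num.Theory.
Local Open Scope ring_scope.

Section Aux.
Variable (R : realFieldType) (T : finType) (e : rel T).

Lemma indepP (I : {set T}) : reflect {in I &, forall x y, ~~ e x y} (indep e I).
Proof.
apply: (iffP forall_inP) => [H x y xI yI | H x xI].
  exact: (forall_inP (H x xI)).
by apply/forall_inP => y yI; exact: H.
Qed.

Lemma indep_sub (I J : {set T}) : I \subset J -> indep e J -> indep e I.
Proof.
move=> /subsetP sIJ /indepP H; apply/indepP => x y xI yI; apply: H; exact: sIJ.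
Qed.

Lemma Zpart_sum (S : {set T}) (l : R) :
  Zpart e S l = \sum_(A : {set T} | (A \subset S) && indep e A) l ^+ #|A|.
Proof. by rewrite /Zpart /indpoly horner_sum; apply: eq_bigr => A _; rewrite hornerXn. Qed.

Lemma Zderiv_sum (S : {set T}) (l : R) :
  l * Zderiv e S l = \sum_(A : {set T} | (A \subset S) && indep e A) #|A|%:R * l ^+ #|A|.
Proof.
rewrite /Zderiv /indpoly raddf_sum horner_sum mulr_sumr; apply: eq_bigr => A _.
rewrite /= derivXn hornerMn hornerXn mulrnAr.
case: #|A| => [|n] /=; first by rewrite !mulr0n mul0r.
by rewrite -exprS mulr_natl.
Qed.

Lemma split_sum (N : {set T}) (G : {set T} -> R) :
  \sum_(I : {set T}) G I =
  \sum_(K : {set T} | K :&: N == set0) \sum_(A : {set T} | A \subset N) G (K :|: A).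
Proof.
rewrite (partition_big (fun I => I :\: N) (fun K => K :&: N == set0)); last first.
  by move=> I _; apply/eqP/setP => x; rewrite !inE; case: (x \in N); rewrite ?andbF.
apply: eq_bigr => K /eqP KN.
rewrite (reindex_onto (fun A => K :|: A) (fun I => I :&: N)); last first.
  move=> I /eqP <-; apply/setP => x; rewrite !inE; by case: (x \in N); case: (x \in I).
apply: eq_bigl => A /=.
apply/idP/idP.
  move=> /andP[_ /eqP <-]; exact: subsetIr.
move=> /subsetP AN.
have KN' : forall x, x \in K -> x \notin N.
  move=> x xK; apply/negP => xN.
  have : x \in K :&: N by rewrite inE xK xN.
  by rewrite KN inE.
apply/andP; split; apply/eqP/setP => x; rewrite !inE.
  case xK: (x \in K); first by rewrite (negbTE (KN' _ xK)).
  case xA: (x \in A); last by rewrite andbF.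
  by rewrite (AN _ xA).
case xA: (x \in A); first by rewrite (AN _ xA) orbT.
case xK: (x \in K) => //=.
by rewrite (negbTE (KN' _ xK)).
Qed.


Lemma indep0 : indep e set0.
Proof. by apply/indepP => x y; rewrite inE. Qed.

Lemma Zpart_gt0 (S : {set T}) (l : R) : 0 < l ->
  0 < \sum_(A : {set T} | (A \subset S) && indep e A) l ^+ #|A|.
Proof.
move=> l0; rewrite (bigD1 set0) /=; last by rewrite sub0set indep0.
rewrite cards0 expr0.
have : 0 <= \sum_(i : {set T} | ((i \subset S) && indep e i) && (i != set0)) l ^+ #|i|.
  by apply: sumr_ge0 => i _; rewrite exprn_ge0 // ltW.
lra.
Qed.

Lemma key_S (S : {set T}) (l c g : R) : 0 < l ->
  1 <= c * (Zpart e S l)^-1 + g * (l * Zderiv e S l / Zpart e S l) ->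
  0 <= \sum_(A : {set T} | (A \subset S) && indep e A)
          l ^+ #|A| * (c * (A == set0)%:R + g * #|A|%:R - 1).
Proof.
move=> l0 H.
have Zp := Zpart_gt0 S l0.
rewrite -Zpart_sum in Zp.
rewrite mulrA -mulrDl ler_pdivlMr // mul1r Zderiv_sum Zpart_sum in H.
have -> : \sum_(A : {set T} | (A \subset S) && indep e A)
          l ^+ #|A| * (c * (A == set0)%:R + g * #|A|%:R - 1) =
   c * \sum_(A : {set T} | (A \subset S) && indep e A) (A == set0)%:R * l ^+ #|A|
   + g * \sum_(A : {set T} | (A \subset S) && indep e A) #|A|%:R * l ^+ #|A|
   - \sum_(A : {set T} | (A \subset S) && indep e A) l ^+ #|A|.
  rewrite !mulr_sumr -big_split -sumrB /=; apply: eq_bigr => A _; ring.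
have -> : \sum_(A : {set T} | (A \subset S) && indep e A) (A == set0)%:R * l ^+ #|A| = 1.
  rewrite (bigD1 set0) /=; last by rewrite sub0set indep0.
  rewrite big1 ?addr0; first by rewrite eqxx cards0 expr0 mulr1.
  by move=> A /andP[_ /negbTE ->]; rewrite mul0r.
lra.
Qed.

Lemma local_u (sym : symmetric e) (u : T) (l c g : R) : 0 < l ->
  (forall S : {set T}, S \subset nbhd e u ->
     1 <= c * (Zpart e S l)^-1 + g * (l * Zderiv e S l / Zpart e S l)) ->
  \sum_(I : {set T} | indep e I) l ^+ #|I| <=
  c * \sum_(I : {set T} | indep e I && (nbhd e u :&: I == set0)) l ^+ #|I|
  + g * \sum_(I : {set T} | indep e I) l ^+ #|I| * #|nbhd e u :&: I|%:R.
Proof.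
move=> l0 H; set N := nbhd e u.
rewrite -subr_ge0.
have -> : c * \sum_(I : {set T} | indep e I && (N :&: I == set0)) l ^+ #|I|
  + g * \sum_(I : {set T} | indep e I) l ^+ #|I| * #|N :&: I|%:R
  - \sum_(I : {set T} | indep e I) l ^+ #|I|
  = \sum_(I : {set T}) (if indep e I then
       l ^+ #|I| * (c * (N :&: I == set0)%:R + g * #|N :&: I|%:R - 1) else 0).
  rewrite -big_mkcond big_mkcondr !mulr_sumr -big_split -sumrB /=.
  apply: eq_bigr => I _; case: (N :&: I == set0) => /=; ring.
rewrite (split_sum N); apply: sumr_ge0 => K /eqP KN.
have KN' : forall x, x \in K -> x \notin N.
  move=> x xK; apply/negP => xN.
  have : x \in K :&: N by rewrite inE xK xN.
  by rewrite KN inE.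
case indK: (indep e K); last first.
  rewrite big1 // => A _.
  have -> // : indep e (K :|: A) = false.
  apply/negbTE; apply: contraFN indK; apply: indep_sub; exact: subsetUl.
rewrite -big_mkcondr.
set S := [set a in N | [forall k in K, ~~ e k a]].
have SN : S \subset N by apply/subsetP => a; rewrite inE => /andP[].
rewrite (eq_bigl (fun A : {set T} => (A \subset S) && indep e A)); last first.
  move=> A /=; apply/idP/idP.
    move=> /andP[AN iKA]; apply/andP; split; last first.
      by apply: indep_sub iKA; exact: subsetUr.
    apply/subsetP => a aA; rewrite inE (subsetP AN _ aA) /=.
    apply/forall_inP => k kK; move/indepP: iKA; apply; rewrite inE ?kK ?aA ?orbT //.
  move=> /andP[AS iA]; apply/andP; split; first exact: subset_trans AS SN.
  apply/indepP => x y; rewrite !inE => /orP[xK|xA] /orP[yK|yA].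
  - by move/indepP: indK; apply.
  - by move: (subsetP AS _ yA); rewrite inE => /andP[_ /forall_inP]; apply.
  - by rewrite sym; move: (subsetP AS _ xA); rewrite inE => /andP[_ /forall_inP]; apply.
  - by move/indepP: iA; apply.
rewrite (eq_bigr (fun A : {set T} => l ^+ #|K| * (l ^+ #|A| * (c * (A == set0)%:R + g * #|A|%:R - 1)))); last first.
  move=> A /andP[AS _].
  have AN := subset_trans AS SN.
  have NKA : N :&: (K :|: A) = A.
    apply/setP => x; rewrite in_setI in_setU.
    case xA: (x \in A); first by rewrite (subsetP AN _ xA) orbT.
    case xK: (x \in K); last by rewrite andbF.
    by rewrite (negbTE (KN' _ xK)).
  have KA : K :&: A = set0.
    apply/setP => x; rewrite !inE.
    case xK: (x \in K) => //=; apply/negbTE; apply: contra (KN' _ xK).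
    exact: (subsetP AN).
  have cKA : #|K :|: A| = (#|K| + #|A|)%N.
    by rewrite -cardsUI KA cards0 addn0.
  by rewrite NKA cKA exprD mulrA.
rewrite -mulr_sumr; apply: mulr_ge0; first by rewrite exprn_ge0 // ltW.
by apply: key_S => //; apply: H.
Qed.

Lemma occ_u (sym : symmetric e) (irr : irreflexive e) (u : T) (l : R) : 0 < l ->
  l / (1 + l) * \sum_(I : {set T} | indep e I && (nbhd e u :&: I == set0)) l ^+ #|I|
  = \sum_(I : {set T} | indep e I && (u \in I)) l ^+ #|I|.
Proof.
move=> l0; set N := nbhd e u.
rewrite [X in _ * X](bigID (fun I : {set T} => u \in I)) /=.
have -> : \sum_(I : {set T} | (indep e I && (N :&: I == set0)) && (u \in I)) l ^+ #|I|
   = \sum_(I : {set T} | indep e I && (u \in I)) l ^+ #|I|.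
  apply: eq_bigl => I; case uI: (u \in I); rewrite ?andbT ?andbF //.
  case indI: (indep e I) => //=.
  apply/eqP/setP => x; rewrite !inE; apply/negbTE; apply/negP => /andP[eux xI].
  by move/indepP: indI => /(_ u x uI xI); rewrite eux.
have -> : \sum_(I : {set T} | indep e I && (u \in I)) l ^+ #|I|
   = l * \sum_(J : {set T} | (indep e J && (N :&: J == set0)) && (u \notin J)) l ^+ #|J|.
  rewrite (reindex_onto (fun J => u |: J) (fun I => I :\ u)); last first.
    by move=> I /andP[_ uI]; exact: setD1K.
  rewrite mulr_sumr; apply: eq_big => J.
    case uJ: (u \in J).
      rewrite andbF; apply/negP => /andP[_ /eqP h]; move: uJ.
      by rewrite -h !inE eqxx.
    rewrite setU1K ?uJ // eqxx setU11 /= !andbT.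
    apply/idP/idP.
      move=> iuJ; apply/andP; split; first by apply: (indep_sub _ iuJ); exact: subsetU1.
      apply/eqP/setP => x; rewrite !inE; apply/negbTE; apply/negP => /andP[eux xJ].
      move/indepP: iuJ => /(_ u x); rewrite !inE eqxx xJ orbT eux => /(_ isT isT).
      done.
    move=> /andP[iJ /eqP NJ]; apply/indepP => x y; rewrite !inE.
    have nuJ : forall y, y \in J -> ~~ e u y.
      move=> z zJ; apply/negP => euz.
      have : z \in N :&: J by rewrite !inE euz zJ.
      by rewrite NJ inE.
    case/orP => [/eqP -> | xJ]; case/orP => [/eqP -> | yJ].
    - by rewrite irr.
    - exact: nuJ.
    - by rewrite sym; exact: nuJ.
    - by move/indepP: iJ; apply.
  move=> /andP[/andP[_ _] /eqP h].
  have uJ : u \notin J by rewrite -h !inE eqxx.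
  by rewrite cardsU1 uJ exprS.
set Sd := \sum_(J : {set T} | _) _.
have h1 : 1 + l != 0 by rewrite gt_eqF // ltr_wpDl // ltW.
field; exact: h1.
Qed.

Lemma card_nbhdI (u : T) (I : {set T}) :
  #|nbhd e u :&: I| = (\sum_(v in I) (e u v : nat))%N.
Proof.
rewrite (eq_bigr (fun v => if e u v then 1%N else 0%N)); last by move=> v _; case: (e u v).
rewrite -big_mkcondr sum1dep_card; apply: eq_card => v; rewrite !inE andbC.
by [].
Qed.

Lemma sum_nbhd (sym : symmetric e) (I : {set T}) :
  (\sum_(u : T) #|nbhd e u :&: I| <= #|I| * maxdeg e)%N.
Proof.
rewrite (eq_bigr (fun u => \sum_(v in I) (e u v : nat))%N); last by move=> u _; exact: card_nbhdI.
rewrite exchange_big /= -sum_nat_const; apply: leq_sum => v vI.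
apply: (@leq_trans #|nbhd e v|); last first.
  rewrite /maxdeg; exact: leq_bigmax.
apply: eq_leq; rewrite -(setIT (nbhd e v)) card_nbhdI.
by apply: eq_big => w; [rewrite inE | rewrite sym].
Qed.

End Aux.

Unset Implicit Arguments.
Set Strict Implicit.

Theorem mainTheorem1 (R : realFieldType) (T : finType) (e : rel T)
  (l b g : R) :
  simple_graph e -> (0 < #|T|)%N ->
  0 < l -> 0 < b -> 0 < g ->
  local_occupancy e l b g ->
  (#|T|%:R)^-1 * (l * Zderiv e [set: T] l / Zpart e [set: T] l)
    >= (b + g * (maxdeg e)%:R)^-1
  /\ (alpha e)%:R >= #|T|%:R / (b + g * (maxdeg e)%:R).
Proof.
move=> [sym irr] n0 l0 b0 g0 H.
rewrite Zderiv_sum Zpart_sum.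
set Z := \sum_(I : {set T} | indep e I) l ^+ #|I|.
set D := \sum_(I : {set T} | indep e I) #|I|%:R * l ^+ #|I|.
have -> : \sum_(A : {set T} | (A \subset [set: T]) && indep e A) l ^+ #|A| = Z.
  by apply: eq_bigl => I; rewrite subsetT.
have -> : \sum_(A : {set T} | (A \subset [set: T]) && indep e A) #|A|%:R * l ^+ #|A| = D.
  by apply: eq_bigl => I; rewrite subsetT.
set B := b + g * (maxdeg e)%:R.
have Z0 : 0 < Z.
  have := Zpart_gt0 e [set: T] l0.
  by rewrite (eq_bigl (fun I : {set T} => indep e I)) // => I; rewrite subsetT.
have B0 : 0 < B by rewrite /B; apply: ltr_wpDr => //; apply: mulr_ge0; [exact: ltW | exact: ler0n].
have c_def : forall u, b * (l / (1 + l)) *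
    \sum_(I : {set T} | indep e I && (nbhd e u :&: I == set0)) l ^+ #|I|
    = b * \sum_(I : {set T} | indep e I && (u \in I)) l ^+ #|I|.
  by move=> u; rewrite -mulrA occ_u.
have HU : forall u, Z <= b * \sum_(I : {set T} | indep e I && (u \in I)) l ^+ #|I|
   + g * \sum_(I : {set T} | indep e I) l ^+ #|I| * #|nbhd e u :&: I|%:R.
  move=> u; rewrite -c_def; apply: local_u => //.
  by move=> S SN; exact: (H u S SN).
have HF : \sum_(u : T) \sum_(I : {set T} | indep e I && (u \in I)) l ^+ #|I| = D.
  rewrite (eq_bigr (fun u => \sum_(I : {set T} | indep e I) if u \in I then l ^+ #|I| else 0));
    last by move=> u _; rewrite big_mkcondr.
  rewrite exchange_big /=; apply: eq_bigr => I _.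
  by rewrite -big_mkcond /= sumr_const mulr_natl.
have HM : \sum_(u : T) \sum_(I : {set T} | indep e I) l ^+ #|I| * #|nbhd e u :&: I|%:R
    <= (maxdeg e)%:R * D.
  rewrite exchange_big /= mulr_sumr; apply: ler_sum => I _.
  rewrite -mulr_sumr -natr_sum mulrA -natrM [X in X <= _]mulrC.
  apply: ler_wpM2r; first by rewrite exprn_ge0 // ltW.
  by rewrite ler_nat mulnC; exact: sum_nbhd.
have HnZ : #|T|%:R * Z <= B * D.
  have h : \sum_(u : T) Z <= \sum_(u : T) (b * \sum_(I : {set T} | indep e I && (u \in I)) l ^+ #|I|
   + g * \sum_(I : {set T} | indep e I) l ^+ #|I| * #|nbhd e u :&: I|%:R).
    by apply: ler_sum => u _; exact: HU.
  rewrite sumr_const big_split /= -!mulr_sumr HF -mulr_natl in h.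
  apply: (le_trans h).
  rewrite /B mulrDl lerD2l -mulrA; apply: ler_wpM2l; [exact: ltW | exact: HM].
have HDa : D <= (alpha e)%:R * Z.
  rewrite /D /Z mulr_sumr; apply: ler_sum => I iI.
  apply: ler_wpM2r; first by rewrite exprn_ge0 // ltW.
  by rewrite ler_nat /alpha; exact: leq_bigmax_cond.
have n0' : 0 < #|T|%:R :> R by rewrite ltr0n.
split.
  rewrite ler_pdivlMl // ler_pdivlMr // mulrAC ler_pdivrMr // mulrC.
  by rewrite mulrC [X in _ <= X]mulrC.
rewrite ler_pdivrMr //.
nra.
Qed.
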